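(* Let $d\ge1$, let $H$ be a hypergraph of $d$-intervals and let $w$ be a weight system on $H$. Then $\tau^*_w(H)\le 2d\,\nu_w(H)$.
   Context: A $d$-interval is a union of at most $d$ pairwise disjoint closed intervals of the real line $\mathbb{R}$. A hypergraph of $d$-intervals is a finite family $H$ of $d$-intervals, regarded as a hypergraph whose vertices are the points of $\mathbb{R}$ and whose edges are the members of $H$. A matching is a set of pairwise disjoint edges. A weight system on $H$ is a function $w:H\to\mathbb{N}$. $\nu_w(H)$ is the maximum of $\sum_{h\in M}w(h)$ over all matchings $M\subseteq H$. A fractional $w$-cover is a finitely supported function $g:\mathbb{R}\to\mathbb{R}_{\ge0}$ with $\sum_{v\in h}g(v)\ge w(h)$ for every $h\in H$; $\tau^*_w(H)$ is the infimum of $\sum_v g(v)$ over all fractional $w$-covers (equivalently, by LP duality, the supremum of $\sum_{h\in H}w(h)f(h)$ over all $f:H\to\mathbb{R}_{\ge0}$ with $\sum_{h\ni v}f(h)\le1$ for every point $v$). *)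

(* Defs.v *)
From Stdlib Require Import Reals List.
Import ListNotations.
Open Scope R_scope.

(* A closed interval [a,b] of the real line, represented by (a,b) with a <= b. *)
Definition interval : Type := (R * R)%type.
Definition valid_interval (I : interval) : Prop := fst I <= snd I.

Definition in_intervalb (x : R) (I : interval) : bool :=
  if Rle_dec (fst I) x then (if Rle_dec x (snd I) then true else false) else false.

(* A (candidate) d-interval: a finite list of closed intervals; its point set is their union. *)
Definition dint : Type := list interval.

Definition in_dintb (x : R) (h : dint) : bool := existsb (in_intervalb x) h.
Definition in_dint (x : R) (h : dint) : Prop := in_dintb x h = true.

Definition is_dinterval (d : nat) (h : dint) : Prop :=
  (1 <= length h <= d)%nat /\ Forall valid_interval h /\
  (forall i j : nat, (i < length h)%nat -> (j < length h)%nat -> i <> j ->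
     forall x : R, ~ (in_intervalb x (nth i h (0,0)) = true /\
                     in_intervalb x (nth j h (0,0)) = true)).

Definition disjoint_dint (h1 h2 : dint) : Prop :=
  forall x : R, ~ (in_dint x h1 /\ in_dint x h2).

(* Hypergraph H : list dint (edges indexed by positions 0 .. length H - 1);
   weight system w : nat -> nat, w i is the weight of edge number i. *)

Definition is_matching (H : list dint) (M : list nat) : Prop :=
  NoDup M /\ (forall i, In i M -> (i < length H)%nat) /\
  (forall i j, In i M -> In j M -> i <> j ->
     disjoint_dint (nth i H nil) (nth j H nil)).

Definition matching_weight (w : nat -> nat) (M : list nat) : nat :=
  fold_right (fun i s => (w i + s)%nat) 0%nat M.

Definition is_nu (H : list dint) (w : nat -> nat) (n : nat) : Prop :=
  (exists M, is_matching H M /\ matching_weight w M = n) /\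
  (forall M, is_matching H M -> (matching_weight w M <= n)%nat).

(* A finitely supported function g : R -> R_{>=0}, given as a list of
   (point, value) pairs; g(v) is the sum of the values attached to v. *)
Definition fsfun : Type := list (R * R).

Definition fs_nonneg (g : fsfun) : Prop := Forall (fun p => 0 <= snd p) g.

Definition mass (g : fsfun) (h : dint) : R :=
  fold_right (fun p s => (if in_dintb (fst p) h then snd p else 0) + s) 0 g.

Definition total (g : fsfun) : R := fold_right (fun p s => snd p + s) 0 g.

Definition is_frac_cover (H : list dint) (w : nat -> nat) (g : fsfun) : Prop :=
  fs_nonneg g /\
  (forall i, (i < length H)%nat -> INR (w i) <= mass g (nth i H nil)).

(* tau*_w(H) <= t, i.e. the infimum of the totals of fractional w-covers is <= t. *)
Definition tau_star_le (H : list dint) (w : nat -> nat) (t : R) : Prop :=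
  forall eps : R, eps > 0 ->
    exists g, is_frac_cover H w g /\ total g <= t + eps.

(* Main.v *)
Require Import Defs.
From Stdlib Require Import Reals List.
From Stdlib Require Import Lra Lia Classical ClassicalEpsilon.
Import ListNotations.
Open Scope R_scope.


Fixpoint sumn (n : nat) (f : nat -> R) : R :=
  match n with O => 0 | S k => sumn k f + f k end.

Lemma sumn_ext n f g : (forall i, (i < n)%nat -> f i = g i) -> sumn n f = sumn n g.
Proof. induction n; simpl; intros H; auto. rewrite IHn by (intros; apply H; lia). rewrite H by lia. auto. Qed.

Lemma sumn_le n f g : (forall i, (i < n)%nat -> f i <= g i) -> sumn n f <= sumn n g.
Proof. induction n; simpl; intros H; [lra|]. assert (f n <= g n) by (apply H; lia).
  assert (sumn n f <= sumn n g) by (apply IHn; intros; apply H; lia). lra. Qed.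

Lemma sumn_lt n f g : (forall i, (i < n)%nat -> f i <= g i) ->
  (exists i, (i < n)%nat /\ f i < g i) -> sumn n f < sumn n g.
Proof. induction n; simpl; intros H [i [Hi Hl]]; [lia|].
  destruct (Nat.eq_dec i n) as [->|Hne].
  - assert (sumn n f <= sumn n g) by (apply sumn_le; intros; apply H; lia). lra.
  - assert (f n <= g n) by (apply H; lia).
    assert (sumn n f < sumn n g) by (apply IHn; [intros; apply H; lia| exists i; split; [lia|auto]]). lra. Qed.

Lemma sumn_plus n f g : sumn n (fun i => f i + g i) = sumn n f + sumn n g.
Proof. induction n; simpl; [lra|]. rewrite IHn. lra. Qed.

Lemma sumn_scal n c f : sumn n (fun i => c * f i) = c * sumn n f.
Proof. induction n; simpl; [lra|]. rewrite IHn. lra. Qed.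

Lemma sumn_nonneg n f : (forall i, (i < n)%nat -> 0 <= f i) -> 0 <= sumn n f.
Proof. intros H. replace 0 with (sumn n (fun _ => 0)). apply sumn_le; auto.
  induction n; simpl; auto. rewrite IHn. lra. intros; apply H; lia. Qed.

Lemma sumn_zero n : sumn n (fun _ => 0) = 0.
Proof. induction n; simpl; auto. rewrite IHn. lra. Qed.

Lemma sumn_swap n m f : sumn n (fun i => sumn m (fun j => f i j)) = sumn m (fun j => sumn n (fun i => f i j)).
Proof. induction n; simpl. rewrite sumn_zero; auto. rewrite IHn. rewrite <- sumn_plus. auto. Qed.

Lemma sumn_single n k c : (k < n)%nat -> sumn n (fun i => if Nat.eq_dec i k then c else 0) = c.
Proof. induction n; intros Hk; simpl; [lia|]. destruct (Nat.eq_dec n k).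
  - subst. rewrite (sumn_ext _ _ (fun _ => 0)). rewrite sumn_zero. lra.
    intros i Hi. destruct (Nat.eq_dec i k); [lia|auto].
  - rewrite IHn by lia. lra. Qed.

Definition cstr : Type := ((nat -> R) * R)%type.
Definition dot (n : nat) (a x : nat -> R) : R := sumn n (fun i => a i * x i).

Inductive der (S : list cstr) : (nat -> R) -> R -> Prop :=
| der_in : forall a b, In (a, b) S -> der S a b
| der_add : forall a b a' b', der S a b -> der S a' b' ->
     der S (fun i => a i + a' i) (b + b')
| der_scale : forall c a b, 0 <= c -> der S a b -> der S (fun i => c * a i) (c * b)
| der_ext : forall a b a' b', der S a b -> (forall i, a i = a' i) -> b <= b' -> der S a' b'.

Lemma der_mono S S' a b : (forall c, In c S' -> der S (fst c) (snd c)) -> der S' a b -> der S a b.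
Proof. intros H D. induction D.
  - apply (H (a, b)); auto.
  - apply der_add; auto.
  - apply der_scale; auto.
  - eapply der_ext; eauto. Qed.

Lemma der_coef S k a b : (forall c, In c S -> fst c k = 0) -> der S a b -> a k = 0.
Proof. intros H D. induction D.
  - apply (H (a, b)); auto.
  - rewrite IHD1, IHD2; lra.
  - rewrite IHD; lra.
  - rewrite <- H0; auto. Qed.

Definition feasible (n : nat) (S : list cstr) : Prop :=
  exists x, forall c, In c S -> dot n (fst c) x <= snd c.

Definition comb (m : nat) (p q : cstr) : cstr :=
  ((fun i => (- fst q m) * fst p i + fst p m * fst q i),
   (- fst q m) * snd p + fst p m * snd q).

Definition FM (m : nat) (S : list cstr) : list cstr :=
  filter (fun c => if Req_EM_T (fst c m) 0 then true else false) S ++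
  flat_map (fun p => map (fun q => comb m p q)
     (filter (fun q => if Rlt_dec (fst q m) 0 then true else false) S))
   (filter (fun p => if Rlt_dec 0 (fst p m) then true else false) S).

Lemma FM_in m S c : In c (FM m S) ->
  (In c S /\ fst c m = 0) \/
  (exists p q, In p S /\ In q S /\ 0 < fst p m /\ fst q m < 0 /\ c = comb m p q).
Proof. unfold FM. intros H. apply in_app_or in H as [H|H].
  - apply filter_In in H as [H1 H2]. destruct (Req_EM_T (fst c m) 0); [left; auto | discriminate].
  - right. apply in_flat_map in H as [p [Hp Hc]]. apply filter_In in Hp as [Hp1 Hp2].
    apply in_map_iff in Hc as [q [Hq1 Hq2]]. apply filter_In in Hq2 as [Hq3 Hq4].
    destruct (Rlt_dec 0 (fst p m)); [|discriminate]. destruct (Rlt_dec (fst q m) 0); [|discriminate].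
    exists p, q; repeat split; auto. Qed.

Lemma FM_in2 m S p q : In p S -> In q S -> 0 < fst p m -> fst q m < 0 -> In (comb m p q) (FM m S).
Proof. intros. unfold FM. apply in_or_app; right. apply in_flat_map. exists p. split.
  apply filter_In; split; auto. destruct (Rlt_dec 0 (fst p m)); auto; lra.
  apply in_map. apply filter_In; split; auto. destruct (Rlt_dec (fst q m) 0); auto; lra. Qed.

Lemma FM_in1 m S c : In c S -> fst c m = 0 -> In c (FM m S).
Proof. intros. unfold FM. apply in_or_app; left. apply filter_In; split; auto.
  destruct (Req_EM_T (fst c m) 0); auto. Qed.

Lemma dot_ext n a x y : (forall i, (i < n)%nat -> x i = y i) -> dot n a x = dot n a y.
Proof. intros H. unfold dot. apply sumn_ext. intros. rewrite H; auto. Qed.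

Lemma dot_comb m p q x : dot m (fst (comb m p q)) x = (- fst q m) * dot m (fst p) x + fst p m * dot m (fst q) x.
Proof. unfold dot, comb; simpl. rewrite <- !sumn_scal, <- sumn_plus. apply sumn_ext. intros; ring. Qed.

Lemma ex_min (C : Type) (PU : C -> Prop) (Uf : C -> R) (S : list C) :
  exists t, forall c, In c S -> PU c -> t <= Uf c.
Proof. induction S as [|c S [t Ht]]. exists 0; intros c []. 
  exists (Rmin t (Uf c)). intros c' [<-|H] HP. apply Rmin_r. eapply Rle_trans; [apply Rmin_l|]. auto. Qed.

Lemma ex_max (C : Type) (PL : C -> Prop) (Lf : C -> R) (S : list C) (t0 : R) :
  exists t, t0 <= t /\ (forall c, In c S -> PL c -> Lf c <= t) /\
            (t = t0 \/ exists c, In c S /\ PL c /\ t = Lf c).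
Proof. induction S as [|c S [t [H1 [H2 H3]]]]. exists t0; split; [lra|split]; [intros c []|auto].
  destruct (classic (PL c)) as [HP|HP].
  - exists (Rmax t (Lf c)). split; [eapply Rle_trans; [apply H1|apply Rmax_l]|split].
    + intros c' [<-|H] HP'. apply Rmax_r. eapply Rle_trans; [apply H2; auto|apply Rmax_l].
    + unfold Rmax. destruct (Rle_dec t (Lf c)). right. exists c; split; [left|]; auto.
      destruct H3 as [H3|[c' [? [? ?]]]]; [left; auto|right; exists c'; split; [right|]; auto].
  - exists t. split; auto. split. intros c' [<-|H] HP'. contradiction. auto.
    destruct H3 as [H3|[c' [? [? ?]]]]; [left; auto|right; exists c'; split; [right|]; auto]. Qed.

Theorem farkas : forall n S, feasible n S \/
  exists a b, der S a b /\ (forall i, (i < n)%nat -> a i = 0) /\ b < 0.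
Proof.
  induction n as [|m IH]; intros S.
  - destruct (classic (exists c, In c S /\ snd c < 0)) as [[c [Hc Hb]]|Hno].
    + right. exists (fst c), (snd c). split; [apply der_in; destruct c; auto|split; auto; intros; lia].
    + left. exists (fun _ => 0). intros c Hc. unfold dot; simpl.
      destruct (Rle_dec 0 (snd c)); auto. exfalso; apply Hno; exists c; split; auto; lra.
  - destruct (IH (FM m S)) as [[x' Hx']|[a [b [D [Ha Hb]]]]].
    + left.
      set (U := fun c : cstr => (snd c - dot m (fst c) x') / fst c m).
      destruct (ex_min cstr (fun c => In c S /\ 0 < fst c m) U S) as [t0 Ht0].
      destruct (ex_max cstr (fun c => In c S /\ fst c m < 0) U S t0) as [t [Ht1 [Ht2 Ht3]]].
      assert (Hup : forall p, In p S -> 0 < fst p m -> t <= U p).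
      { intros p Hp Hpm. destruct Ht3 as [->|[q [Hq [[_ Hqm] ->]]]]. apply Ht0; auto.
        pose proof (Hx' _ (FM_in2 m S p q Hp Hq Hpm Hqm)) as Hc. rewrite dot_comb in Hc. simpl in Hc.
        unfold U. apply (Rmult_le_reg_r (fst p m * - fst q m)). nra.
        replace ((snd q - dot m (fst q) x') / fst q m * (fst p m * - fst q m))
          with (- fst p m * (snd q - dot m (fst q) x')) by (field; lra).
        replace ((snd p - dot m (fst p) x') / fst p m * (fst p m * - fst q m))
          with (- fst q m * (snd p - dot m (fst p) x')) by (field; lra). lra. }
      exists (fun i => if Nat.eq_dec i m then t else x' i).
      intros c Hc. unfold dot; simpl. fold (dot m (fst c) (fun i => if Nat.eq_dec i m then t else x' i)).
      rewrite (dot_ext m (fst c) _ x') by (intros i Hi; destruct (Nat.eq_dec i m); [lia|auto]).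
      destruct (Nat.eq_dec m m) as [_|]; [|lia].
      destruct (Rtotal_order (fst c m) 0) as [Hn|[Hz|Hp]].
      * assert (U c <= t) by (apply Ht2; auto). unfold U in H.
        apply (Rmult_le_compat_r (- fst c m)) in H; [|lra].
        replace ((snd c - dot m (fst c) x') / fst c m * - fst c m) with (- (snd c - dot m (fst c) x')) in H by (field; lra). nra.
      * rewrite Hz. pose proof (Hx' _ (FM_in1 m S c Hc Hz)). lra.
      * assert (t <= U c) by (apply Hup; auto). unfold U in H.
        apply (Rmult_le_compat_r (fst c m)) in H; [|lra].
        replace ((snd c - dot m (fst c) x') / fst c m * fst c m) with (snd c - dot m (fst c) x') in H by (field; lra). nra.
    + right. exists a, b. split; [|split; auto].
      * apply (der_mono _ (FM m S)); auto. intros c Hc. apply FM_in in Hc as [[Hc _]|[p [q [Hp [Hq [Hpm [Hqm ->]]]]]]].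
        destruct c; apply der_in; auto.
        unfold comb; simpl.
        apply (der_ext _ (fun i => - fst q m * fst p i + fst p m * fst q i) (- fst q m * snd p + fst p m * snd q)); [|intros; auto|lra].
        apply der_add; apply der_scale; try lra; [destruct p; apply der_in; auto|destruct q; apply der_in; auto].
      * intros i Hi. destruct (Nat.eq_dec i m). subst.
        apply (der_coef (FM m S) m a b); auto. intros c Hc. apply FM_in in Hc as [[_ ?]|[p [q [_ [_ [_ [_ ->]]]]]]]; auto.
        unfold comb; simpl; ring. apply Ha; lia.
Qed.

Definition hE (H : list dint) i := nth i H nil.
Definition indc (x : R) (h : dint) : R := if in_dintb x h then 1 else 0.
Definition lefts (h : dint) : list R := map fst h.
Definition Pts (H : list dint) : list R := flat_map lefts H.
Definition load (H : list dint) (mu : nat -> R) (p : R) : R :=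
  sumn (length H) (fun j => mu j * indc p (hE H j)).
Definition meets (H : list dint) i j : Prop := exists x, in_dint x (hE H i) /\ in_dint x (hE H j).
Definition mt (H : list dint) i j : R :=
  if excluded_middle_informative (meets H i j) then 1 else 0.
Definition lsum (f : R -> R) (L : list R) : R := fold_right (fun p s => f p + s) 0 L.

Lemma ind_bounds x h : 0 <= indc x h <= 1.
Proof. unfold indc; destruct (in_dintb x h); lra. Qed.

Lemma lsum_nonneg f L : (forall p, In p L -> 0 <= f p) -> 0 <= lsum f L.
Proof. induction L; simpl; intros H; [lra|]. pose proof (H a (or_introl eq_refl)).
  assert (0 <= lsum f L) by (apply IHL; auto). lra. Qed.

Lemma lsum_ge f L p : (forall p, In p L -> 0 <= f p) -> In p L -> f p <= lsum f L.
Proof. induction L; simpl; intros H Hp; [contradiction|]. destruct Hp as [->|Hp].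
  assert (0 <= lsum f L) by (apply lsum_nonneg; auto). lra.
  pose proof (H a (or_introl eq_refl)). assert (f p <= lsum f L) by (apply IHL; auto). lra. Qed.

Lemma lsum_le_const f L c : (forall p, In p L -> f p <= c) -> lsum f L <= INR (length L) * c.
Proof. unfold lsum. induction L; intros H; simpl fold_right; simpl length; [simpl; lra|]. rewrite S_INR.
  pose proof (H a (or_introl eq_refl)).
  assert (fold_right (fun p s => f p + s) 0 L <= INR (length L) * c) by (apply IHL; intros; apply H; right; auto). lra. Qed.

Lemma lsum_scal c f L : c * lsum f L = lsum (fun p => c * f p) L.
Proof. induction L; simpl; [ring|]. rewrite <- IHL. ring. Qed.

Lemma sumn_lsum n F L : sumn n (fun j => lsum (fun p => F j p) L) = lsum (fun p => sumn n (fun j => F j p)) L.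
Proof. induction L; simpl. apply sumn_zero. rewrite sumn_plus. rewrite IHL. auto. Qed.

Lemma in_dint_ex x h : in_dint x h -> exists I, In I h /\ fst I <= x <= snd I.
Proof. unfold in_dint, in_dintb. intros H. apply existsb_exists in H as [I [HI Hx]].
  exists I; split; auto. unfold in_intervalb in Hx. destruct (Rle_dec (fst I) x); [|discriminate].
  destruct (Rle_dec x (snd I)); [|discriminate]. lra. Qed.

Lemma in_dint_of x h I : In I h -> fst I <= x <= snd I -> in_dintb x h = true.
Proof. intros HI Hx. unfold in_dintb. apply existsb_exists. exists I; split; auto.
  unfold in_intervalb. destruct (Rle_dec (fst I) x); [|lra]. destruct (Rle_dec x (snd I)); [|lra]. auto. Qed.

Lemma mt_le H i j : mt H i j <= lsum (fun p => indc p (hE H j)) (lefts (hE H i)) +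
                              lsum (fun p => indc p (hE H i)) (lefts (hE H j)).
Proof. unfold mt. assert (forall k l, 0 <= lsum (fun p => indc p (hE H k)) (lefts (hE H l))).
  { intros; apply lsum_nonneg; intros; apply ind_bounds. }
  destruct (excluded_middle_informative (meets H i j)) as [[x [Hi Hj]]|].
  2: { pose proof (H0 j i); pose proof (H0 i j); lra. }
  apply in_dint_ex in Hi as [I [HI HxI]]. apply in_dint_ex in Hj as [J [HJ HxJ]].
  destruct (Rle_dec (fst I) (fst J)).
  - assert (indc (fst J) (hE H i) <= lsum (fun p => indc p (hE H i)) (lefts (hE H j))).
    { apply (lsum_ge (fun p => indc p (hE H i))). intros; apply ind_bounds. apply in_map; auto. }
    unfold indc at 1 in H1. rewrite (in_dint_of _ _ I) in H1 by (auto; split; lra).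
    pose proof (H0 j i). lra.
  - assert (indc (fst I) (hE H j) <= lsum (fun p => indc p (hE H j)) (lefts (hE H i))).
    { apply (lsum_ge (fun p => indc p (hE H j))). intros; apply ind_bounds. apply in_map; auto. }
    unfold indc at 1 in H1. rewrite (in_dint_of _ _ J) in H1 by (auto; split; lra).
    pose proof (H0 i j). lra. Qed.

Lemma lefts_in_P H i p : (i < length H)%nat -> In p (lefts (hE H i)) -> In p (Pts H).
Proof. intros Hi Hp. unfold Pts. apply in_flat_map. exists (hE H i). split; auto. apply nth_In; auto. Qed.

Lemma avg (d : nat) (H : list dint) (mu : nat -> R) (th : R) :
  (forall i, (i < length H)%nat -> (length (hE H i) <= d)%nat) ->
  (forall i, 0 <= mu i) -> 0 <= th ->
  (forall p, In p (Pts H) -> load H mu p <= th) ->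
  (exists i, (i < length H)%nat /\ 0 < mu i) ->
  exists i0, (i0 < length H)%nat /\ 0 < mu i0 /\
     sumn (length H) (fun j => mu j * mt H i0 j) <= 2 * INR d * th.
Proof.
  intros Hd Hmu Hth Hload Hex. set (n := length H) in *.
  apply NNPP. intros Hno.
  assert (Hbig : sumn n (fun i => mu i * (2 * INR d * th)) < sumn n (fun i => mu i * sumn n (fun j => mu j * mt H i j))).
  { apply sumn_lt.
    - intros i Hi. destruct (Rle_lt_or_eq_dec 0 (mu i) (Hmu i)) as [Hp|He].
      + apply Rmult_le_compat_l; [lra|]. destruct (Rle_dec (sumn n (fun j => mu j * mt H i j)) (2 * INR d * th)) as [Hl|Hl].
        exfalso; apply Hno; exists i; auto. lra.
      + rewrite <- He; lra.
    - destruct Hex as [i [Hi Hp]]. exists i; split; auto. apply Rmult_lt_compat_l; auto.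
      destruct (Rle_dec (sumn n (fun j => mu j * mt H i j)) (2 * INR d * th)) as [Hl|Hl].
      exfalso; apply Hno; exists i; auto. lra. }
  set (A := fun i j => lsum (fun p => indc p (hE H j)) (lefts (hE H i))).
  assert (HX : sumn n (fun i => mu i * sumn n (fun j => mu j * A i j)) <= sumn n (fun i => mu i * (INR d * th))).
  { apply sumn_le. intros i Hi. apply Rmult_le_compat_l; auto.
    replace (sumn n (fun j => mu j * A i j)) with (lsum (fun p => load H mu p) (lefts (hE H i))).
    - eapply Rle_trans. apply lsum_le_const. intros p Hp. apply Hload. eapply lefts_in_P; eauto.
      apply Rmult_le_compat_r; auto. apply le_INR. unfold lefts; rewrite length_map. apply Hd; auto.
    - unfold A, load. rewrite <- sumn_lsum. apply sumn_ext. intros j Hj.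
      rewrite lsum_scal. auto. }
  assert (Hup : sumn n (fun i => mu i * sumn n (fun j => mu j * mt H i j)) <=
                sumn n (fun i => mu i * sumn n (fun j => mu j * A i j)) +
                sumn n (fun i => mu i * sumn n (fun j => mu j * A j i))).
  { rewrite <- sumn_plus. apply sumn_le. intros i Hi. rewrite <- Rmult_plus_distr_l, <- sumn_plus.
    apply Rmult_le_compat_l; auto. apply sumn_le. intros j Hj. rewrite <- Rmult_plus_distr_l.
    apply Rmult_le_compat_l; auto. apply mt_le. }
  assert (Hsym : sumn n (fun i => mu i * sumn n (fun j => mu j * A j i)) =
                 sumn n (fun i => mu i * sumn n (fun j => mu j * A i j))).
  { transitivity (sumn n (fun i => sumn n (fun j => mu j * (mu i * A j i)))).
    apply sumn_ext; intros; rewrite <- sumn_scal; apply sumn_ext; intros; ring.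
    rewrite sumn_swap. apply sumn_ext; intros; rewrite <- sumn_scal; apply sumn_ext; intros; ring. }
  assert (sumn n (fun i => mu i * (2 * INR d * th)) = 2 * sumn n (fun i => mu i * (INR d * th))).
  { rewrite <- sumn_scal. apply sumn_ext; intros; ring. }
  lra.
Qed.

Fixpoint nsum (n : nat) (f : nat -> nat) : nat :=
  match n with O => O | S k => (nsum k f + f k)%nat end.

Lemma nsum_lt n f g : (forall i, (i < n)%nat -> (f i <= g i)%nat) ->
  (exists i, (i < n)%nat /\ (f i < g i)%nat) -> (nsum n f < nsum n g)%nat.
Proof. induction n; simpl; intros H [i [Hi Hl]]; [lia|].
  assert (Hle : forall k, (k <= n)%nat -> (nsum k f <= nsum k g)%nat).
  { induction k; simpl; intros; [lia|]. assert (f k <= g k)%nat by (apply H; lia). specialize (IHk ltac:(lia)). lia. }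
  destruct (Nat.eq_dec i n) as [->|Hne].
  - specialize (Hle n (le_n n)). lia.
  - assert (f n <= g n)%nat by (apply H; lia).
    assert (nsum n f < nsum n g)%nat by (apply IHn; [intros; apply H; lia| exists i; split; [lia|auto]]). lia. Qed.

Lemma mw_filter (w : nat -> nat) M : matching_weight w (filter (fun j => Nat.ltb 0 (w j)) M) = matching_weight w M.
Proof. induction M; simpl; auto. destruct (Nat.ltb 0 (w a)) eqn:E; simpl; rewrite IHM; auto.
  apply Nat.ltb_ge in E. lia. Qed.

Lemma mw_mono (w w' : nat -> nat) M : (forall j, (w' j <= w j)%nat) -> (matching_weight w' M <= matching_weight w M)%nat.
Proof. intros H; induction M; simpl; auto. specialize (H a). lia. Qed.

Lemma mw_ge (w w' : nat -> nat) M c : (forall j, In j M -> (w' j <= w j)%nat) ->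
  (exists j, In j M /\ (w' j + c <= w j)%nat) -> (matching_weight w' M + c <= matching_weight w M)%nat.
Proof. induction M as [|a M IHM]; simpl; intros H [j [Hj Hjc]]; [contradiction|].
  destruct Hj as [<-|Hj].
  - assert (forall M, (forall j, In j M -> (w' j <= w j)%nat) -> (matching_weight w' M <= matching_weight w M)%nat).
    { induction M0; simpl; intros; auto. assert (w' a0 <= w a0)%nat by auto. specialize (IHM0 (fun j h => H0 j (or_intror h))). lia. }
    specialize (H0 M (fun j h => H j (or_intror h))). lia.
  - assert (w' a <= w a)%nat by auto.
    assert (matching_weight w' M + c <= matching_weight w M)%nat by (apply IHM; eauto). lia. Qed.

Lemma meets_self d H i : (i < length H)%nat -> (forall h, In h H -> is_dinterval d h) -> meets H i i.
Proof. intros Hi Hd. destruct (Hd (hE H i) (nth_In _ _ Hi)) as [[Hl _] [Hv _]].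
  destruct (hE H i) as [|I l] eqn:E; simpl in Hl; [lia|]. inversion Hv; subst.
  exists (fst I). unfold in_dint. rewrite E. split; apply (in_dint_of _ _ I); simpl; auto; unfold valid_interval in *; lra. Qed.

Lemma LR (d : nat) (H : list dint) (th : R) :
  (forall h, In h H -> is_dinterval d h) -> 0 <= th ->
  forall W w, (nsum (length H) w <= W)%nat ->
  forall mu, (forall i, 0 <= mu i) -> (forall p, In p (Pts H) -> load H mu p <= th) ->
  exists M, is_matching H M /\
    sumn (length H) (fun i => mu i * INR (w i)) <= 2 * INR d * th * INR (matching_weight w M).
Proof.
  intros Hd Hth. set (n := length H).
  assert (Hlen : forall i, (i < n)%nat -> (length (hE H i) <= d)%nat).
  { intros i Hi. destruct (Hd (hE H i) (nth_In _ _ Hi)) as [[_ ?] _]; auto. }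
  assert (Hdpos : 0 <= 2 * INR d * th). { pose proof (pos_INR d). nra. }
  induction W as [|W IH]; intros w Hw mu Hmu Hload.
  - exists nil. split. split; [constructor|split; intros; contradiction].
    simpl. rewrite Rmult_0_r. replace 0 with (sumn n (fun _ => 0)) by apply sumn_zero.
    apply Req_le, sumn_ext. intros i Hi. assert (w i = 0%nat).
    { clear -Hw Hi. induction n; simpl in *; [lia|]. destruct (Nat.eq_dec i n); [subst; lia|]. apply IHn; lia. }
    rewrite H0; simpl; ring.
  - set (mu' := fun i => if Nat.ltb 0 (w i) then mu i else 0).
    assert (Hmu' : forall i, 0 <= mu' i). { intros i; unfold mu'; destruct (Nat.ltb 0 (w i)); auto; lra. }
    assert (Hsame : sumn n (fun i => mu i * INR (w i)) = sumn n (fun i => mu' i * INR (w i))).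
    { apply sumn_ext. intros i _. unfold mu'. destruct (Nat.ltb 0 (w i)) eqn:E; auto.
      apply Nat.ltb_ge in E. replace (w i) with 0%nat by lia. simpl; ring. }
    rewrite Hsame.
    assert (Hload' : forall p, In p (Pts H) -> load H mu' p <= th).
    { intros p Hp. eapply Rle_trans; [|apply Hload; auto]. apply sumn_le. intros j Hj.
      pose proof (ind_bounds p (hE H j)). apply Rmult_le_compat_r; [lra|].
      unfold mu'; destruct (Nat.ltb 0 (w j)); [lra|apply Hmu]. auto. }
    destruct (classic (exists i, (i < n)%nat /\ 0 < mu' i)) as [Hex|Hno].
    2: { exists nil. split. split; [constructor|split; intros; contradiction].
      simpl. rewrite Rmult_0_r. replace 0 with (sumn n (fun _ => 0)) by apply sumn_zero.
      apply Req_le, sumn_ext. intros i Hi. destruct (Rle_lt_or_eq_dec 0 (mu' i) (Hmu' i)).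
      exfalso; apply Hno; exists i; auto. rewrite <- e; ring. }
    destruct (avg d H mu' th Hlen Hmu' Hth Hload' Hex) as [i0 [Hi0 [Hpos Hsum]]].
    assert (Hw0 : (0 < w i0)%nat).
    { unfold mu' in Hpos. destruct (Nat.ltb 0 (w i0)) eqn:E; [apply Nat.ltb_lt in E; auto|lra]. }
    set (w' := fun j => if excluded_middle_informative (meets H i0 j) then (w j - w i0)%nat else w j).
    assert (Hww : forall j, (w' j <= w j)%nat).
    { intros j; unfold w'; destruct (excluded_middle_informative (meets H i0 j)); lia. }
    assert (Hself := meets_self d H i0 Hi0 Hd).
    assert (Hw' : (nsum n w' <= W)%nat).
    { assert (nsum n w' < nsum n w)%nat; [|lia]. apply nsum_lt. intros; auto.
      exists i0; split; auto. unfold w'. destruct (excluded_middle_informative (meets H i0 i0)); [lia|contradiction]. }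
    destruct (IH w' Hw' mu' Hmu' Hload') as [M' [HM' Hineq]].
    set (M'' := filter (fun j => Nat.ltb 0 (w' j)) M').
    assert (HM'' : is_matching H M'').
    { destruct HM' as [Hnd [Hin Hdis]]. split; [apply NoDup_filter; auto|split].
      intros i Hi; apply filter_In in Hi; apply Hin; tauto.
      intros i j Hi Hj; apply filter_In in Hi; apply filter_In in Hj; apply Hdis; tauto. }
    assert (Hmw : matching_weight w' M'' = matching_weight w' M') by apply mw_filter.
    assert (Hkey : sumn n (fun i => mu' i * INR (w i)) <= sumn n (fun i => mu' i * INR (w' i)) + INR (w i0) * (2 * INR d * th)).
    { eapply Rle_trans; [|apply Rplus_le_compat_l; apply Rmult_le_compat_l; [apply pos_INR|apply Hsum]].
      rewrite <- sumn_scal, <- sumn_plus. apply sumn_le. intros j Hj. unfold w', mt.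
      destruct (excluded_middle_informative (meets H i0 j)).
      - assert (INR (w j) <= INR (w j - w i0) + INR (w i0)). { rewrite <- plus_INR. apply le_INR. lia. }
        pose proof (Hmu' j). nra.
      - lra. }
    assert (Hgoal : forall M, is_matching H M -> (matching_weight w' M'' + w i0 <= matching_weight w M)%nat ->
       exists M, is_matching H M /\
         sumn n (fun i => mu' i * INR (w i)) <= 2 * INR d * th * INR (matching_weight w M)).
    { intros M HM Hle. exists M. split; auto. eapply Rle_trans; [apply Hkey|].
      eapply Rle_trans; [apply Rplus_le_compat_r; apply Hineq|]. rewrite <- Hmw.
      apply le_INR in Hle. rewrite plus_INR in Hle. nra. }
    destruct (classic (exists j, In j M'' /\ meets H i0 j)) as [[j [Hj Hm]]|Hnm].
    + apply (Hgoal M''); auto. apply mw_ge. intros; auto. exists j. split; auto.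
      apply filter_In in Hj as [_ Hj]. apply Nat.ltb_lt in Hj. unfold w' in *.
      destruct (excluded_middle_informative (meets H i0 j)); [lia|contradiction].
    + apply (Hgoal (i0 :: M'')).
      * destruct HM'' as [Hnd [Hin Hdis]]. split; [constructor; auto|split].
        intros Hi; apply Hnm; exists i0; auto.
        intros i [<-|Hi]; auto.
        intros i j [<-|Hi] [<-|Hj] Hne; try (exfalso; apply Hne; reflexivity).
        -- intros x [Ha Hb]. apply Hnm; exists j; split; auto; exists x; auto.
        -- intros x [Ha Hb]. apply Hnm; exists i; split; auto; exists x; auto.
        -- apply Hdis; auto.
      * simpl. assert (matching_weight w' M'' <= matching_weight w M'')%nat by (apply mw_mono; auto). lia.
Qed.

Lemma fold_shift (A0 : Type) (F : A0 -> R) c l :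
  fold_right (fun p s => F p + s) c l = fold_right (fun p s => F p + s) 0 l + c.
Proof. induction l; simpl; [ring|]. rewrite IHl; ring. Qed.

Lemma fold_seq (A0 : Type) (F : A0 -> R) (G : nat -> A0) m :
  fold_right (fun p s => F p + s) 0 (map G (seq 0 m)) = sumn m (fun k => F (G k)).
Proof. induction m; [simpl; auto|]. rewrite seq_S, map_app, fold_right_app. simpl sumn. simpl fold_right at 2.
  rewrite fold_shift, IHm. ring. Qed.

Definition cK (k : nat) : cstr := ((fun i => if Nat.eq_dec i k then -1 else 0), 0).
Definition cE (H : list dint) (w : nat -> nat) (i : nat) : cstr :=
  ((fun k => - indc (nth k (Pts H) 0) (hE H i)), - INR (w i)).
Definition cT (T : R) : cstr := ((fun _ => 1), T).
Definition LPsys H w T : list cstr :=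
  map cK (seq 0 (length (Pts H))) ++ map (cE H w) (seq 0 (length H)) ++ [cT T].

Lemma load0 H p : load H (fun _ => 0) p = 0.
Proof. unfold load. rewrite (sumn_ext _ _ (fun _ => 0)) by (intros; ring). apply sumn_zero. Qed.

Lemma dual_cert H w T a b : der (LPsys H w T) a b ->
  exists mu th, (forall i, 0 <= mu i) /\ 0 <= th /\
    (forall k, (k < length (Pts H))%nat -> a k <= th - load H mu (nth k (Pts H) 0)) /\
    th * T - sumn (length H) (fun i => mu i * INR (w i)) <= b.
Proof.
  intros D. induction D as [a b Hin|a b a' b' D1 [mu [th [H1 [H2 [H3 H4]]]]] D2 [mu' [th' [H1' [H2' [H3' H4']]]]]
                          |c a b Hc D [mu [th [H1 [H2 [H3 H4]]]]]|a b a' b' D [mu [th [H1 [H2 [H3 H4]]]]] Hext Hb].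
  - unfold LPsys in Hin. apply in_app_or in Hin as [Hin|Hin]; [|apply in_app_or in Hin as [Hin|Hin]].
    + apply in_map_iff in Hin as [k [Hk _]]. unfold cK in Hk. inversion Hk; subst.
      exists (fun _ => 0), 0. split; [intros; lra|split; [lra|split]].
      * intros k' _. rewrite load0. destruct (Nat.eq_dec k' k); lra.
      * rewrite (sumn_ext _ _ (fun _ => 0)) by (intros; ring). rewrite sumn_zero. lra.
    + apply in_map_iff in Hin as [i [Hi Hi2]]. apply in_seq in Hi2. unfold cE in Hi. inversion Hi; subst.
      exists (fun j => if Nat.eq_dec j i then 1 else 0), 0. split; [|split; [|split]].
      * intros j; destruct (Nat.eq_dec j i); lra.
      * lra.
      * intros k _. unfold load. rewrite (sumn_ext _ _ (fun j => if Nat.eq_dec j i then indc (nth k (Pts H) 0) (hE H i) else 0)).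
        rewrite sumn_single by lia. lra. intros j _. destruct (Nat.eq_dec j i); [subst; ring|ring].
      * rewrite (sumn_ext _ _ (fun j => if Nat.eq_dec j i then INR (w i) else 0)).
        rewrite sumn_single by lia. lra. intros j _. destruct (Nat.eq_dec j i); [subst; ring|ring].
    + destruct Hin as [Hin|[]]. unfold cT in Hin. inversion Hin; subst.
      exists (fun _ => 0), 1. split; [intros; lra|split; [lra|split]].
      * intros k _. rewrite load0. lra.
      * rewrite (sumn_ext _ _ (fun _ => 0)) by (intros; ring). rewrite sumn_zero. lra.
  - exists (fun i => mu i + mu' i), (th + th'). split; [|split; [|split]].
    + intros i; pose proof (H1 i); pose proof (H1' i); lra.
    + lra.
    + intros k Hk. specialize (H3 k Hk); specialize (H3' k Hk). unfold load in *.
      rewrite (sumn_ext _ _ (fun j => mu j * indc (nth k (Pts H) 0) (hE H j) + mu' j * indc (nth k (Pts H) 0) (hE H j))) by (intros; ring).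
      rewrite sumn_plus. lra.
    + rewrite (sumn_ext _ _ (fun i => mu i * INR (w i) + mu' i * INR (w i))) by (intros; ring).
      rewrite sumn_plus. lra.
  - exists (fun i => c * mu i), (c * th). split; [|split; [|split]].
    + intros i; pose proof (H1 i); nra.
    + nra.
    + intros k Hk. specialize (H3 k Hk). unfold load in *.
      rewrite (sumn_ext _ _ (fun j => c * (mu j * indc (nth k (Pts H) 0) (hE H j)))) by (intros; ring).
      rewrite sumn_scal. nra.
    + rewrite (sumn_ext _ _ (fun i => c * (mu i * INR (w i)))) by (intros; ring).
      rewrite sumn_scal. nra.
  - exists mu, th. split; [auto|split; [auto|split]]. intros k Hk. rewrite <- Hext. auto. lra.
Qed.

Theorem theorem1p8 (d : nat) (H : list dint) (w : nat -> nat) (n : nat) :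
  (1 <= d)%nat ->
  (forall h, In h H -> is_dinterval d h) ->
  is_nu H w n ->
  tau_star_le H w (2 * INR d * INR n).
Proof.
  intros Hd1 Hd Hnu. set (T := 2 * INR d * INR n). set (m := length (Pts H)).
  destruct (farkas m (LPsys H w T)) as [[x Hx]|[a [b [D [Ha Hb]]]]].
  - set (g := map (fun k => (nth k (Pts H) 0, x k)) (seq 0 m)).
    assert (HxK : forall k, (k < m)%nat -> 0 <= x k).
    { intros k Hk. assert (In (cK k) (LPsys H w T)).
      { unfold LPsys. apply in_or_app; left. apply in_map. apply in_seq. lia. }
      specialize (Hx _ H0). unfold cK, dot in Hx; simpl in Hx.
      rewrite (sumn_ext _ _ (fun i => if Nat.eq_dec i k then - x k else 0)) in Hx.
      rewrite sumn_single in Hx by auto. lra. intros i _. destruct (Nat.eq_dec i k); [subst; ring|ring]. }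
    intros eps Heps. exists g. split; [split|].
    + unfold fs_nonneg, g. apply Forall_forall. intros p Hp. apply in_map_iff in Hp as [k [<- Hk]].
      apply in_seq in Hk. simpl. apply HxK. lia.
    + intros i Hi. assert (In (cE H w i) (LPsys H w T)).
      { unfold LPsys. apply in_or_app; right; apply in_or_app; left. apply in_map. apply in_seq. lia. }
      specialize (Hx _ H0). unfold cE, dot in Hx; simpl in Hx.
      unfold mass, g. rewrite (fold_seq _ (fun p => if in_dintb (fst p) (nth i H nil) then snd p else 0)). simpl.
      rewrite (sumn_ext _ _ (fun k => - (indc (nth k (Pts H) 0) (hE H i) * x k))) in Hx by (intros; ring).
      rewrite (sumn_ext _ _ (fun k => - 1 * (indc (nth k (Pts H) 0) (hE H i) * x k))) in Hx by (intros; ring).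
      rewrite sumn_scal in Hx.
      replace (sumn m (fun k => if in_dintb (nth k (Pts H) 0) (nth i H nil) then x k else 0))
        with (sumn m (fun k => indc (nth k (Pts H) 0) (hE H i) * x k)). lra.
      apply sumn_ext. intros k _. unfold indc, hE. destruct (in_dintb (nth k (Pts H) 0) (nth i H nil)); ring.
    + assert (In (cT T) (LPsys H w T)).
      { unfold LPsys. apply in_or_app; right; apply in_or_app; right. left; auto. }
      specialize (Hx _ H0). unfold cT, dot in Hx; simpl in Hx.
      unfold total, g. rewrite (fold_seq _ (fun p => snd p)). simpl.
      rewrite (sumn_ext _ _ (fun k => x k)) in Hx by (intros; ring). lra.
  - exfalso. destruct (dual_cert H w T a b D) as [mu [th [H1 [H2 [H3 H4]]]]].
    assert (Hl : forall p, In p (Pts H) -> load H mu p <= th).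
    { intros p Hp. apply In_nth with (d := 0) in Hp as [k [Hk <-]]. specialize (H3 k Hk). rewrite Ha in H3 by auto. lra. }
    destruct (LR d H th Hd H2 _ w (le_n _) mu H1 Hl) as [M [HM Hineq]].
    destruct Hnu as [_ Hmax]. specialize (Hmax M HM). apply le_INR in Hmax.
    assert (0 <= 2 * INR d * th) by (pose proof (pos_INR d); nra).
    assert (2 * INR d * th * INR (matching_weight w M) <= th * T) by (unfold T; nra).
    lra.
Qed.
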